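(* Let $\{\hat{\mathcal Z}_t\}$ be Banach spaces, $\mathfrak F$ a class of uniformly bounded measurable functions, and $\varepsilon_t,\delta_t>0$. Suppose $\hat\sigma_t:\mathcal H_t\to\hat{\mathcal Z}_t$, $\hat P_t:\hat{\mathcal Z}_t\times\mathcal A\to\Delta(\hat{\mathcal Z}_{t+1})$, $\hat r_t:\hat{\mathcal Z}_t\times\mathcal A\to\mathbb R$ ($t=1,\dots,T$) satisfy (AP1) for all $t$, all realizations $h_t$ of $H_t$ and all $a_t\in\mathcal A$: $\big|\mathbb E[R_t\mid H_t=h_t,A_t=a_t]-\hat r_t(\hat\sigma_t(h_t),a_t)\big|\le\varepsilon_t$; (AP2) for all $t,h_t,a_t$: with $\mu_t(B)=\mathbb P(\hat\sigma_{t+1}(H_{t+1})\in B\mid H_t=h_t,A_t=a_t)$ and $\nu_t(B)=\hat P_t(B\mid\hat\sigma_t(h_t),a_t)$, $d_{\mathfrak F}(\mu_t,\nu_t)\le\delta_t$. Let $\hat\pi^\#=(\hat\pi^\#_1,\dots,\hat\pi^\#_T)$ with $\hat\pi^\#_t:\hat{\mathcal Z}_t\to\Delta(\mathcal A)$ be an arbitrary stochastic policy. Define $\hat V^{\hat\pi^\#}_{T+1}\equiv0$ and for $t=T,\dots,1$: $\hat Q^{\hat\pi^\#}_t(\hat z,a)=\hat r_t(\hat z,a)+\int\hat V^{\hat\pi^\#}_{t+1}(\hat z')\,\hat P_t(d\hat z'\mid\hat z,a)$ and $\hat V^{\hat\pi^\#}_t(\hat z)=\sum_{a\in\mathcal A}\hat\pi^\#_t(a\mid\hat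 z)\hat Q^{\hat\pi^\#}_t(\hat z,a)$. Define the policy $\pi^\#_t=\hat\pi^\#_t\circ\hat\sigma_t$. Let $\alpha^\#_{T+1}=0$ and $\alpha^\#_t=\varepsilon_t+\rho_{\mathfrak F}(\hat V^{\hat\pi^\#}_{t+1})\delta_t+\alpha^\#_{t+1}$, so $\alpha^\#_t=\varepsilon_t+\sum_{\tau=t+1}^T\big[\rho_{\mathfrak F}(\hat V^{\hat\pi^\#}_\tau)\delta_{\tau-1}+\varepsilon_\tau\big]$. Then for every $t$, every realization $h_t$ of $H_t$ and every $a_t\in\mathcal A$: $|Q^{\pi^\#}_t(h_t,a_t)-\hat Q^{\hat\pi^\#}_t(\hat\sigma_t(h_t),a_t)|\le\alpha^\#_t$ and $|V^{\pi^\#}_t(h_t)-\hat V^{\hat\pi^\#}_t(\hat\sigma_t(h_t))|\le\alpha^\#_t$.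
   Context: Setting: a stochastic input-output system over a finite horizon $t=1,\dots,T$. At each time $t$ an agent chooses an action $A_t$ in a finite action space $\mathcal A$; the system then produces an observation $Y_t$ in a measurable space $\mathcal Y$ and a real reward $R_t$. The history is $H_1=\emptyset$, $H_{t+1}=(H_t,Y_t,A_t)$, taking values in $\mathcal H_t$; the conditional law of $(Y_t,R_t)$ given $(H_t,A_t)$ is fixed by the system. A policy is $\pi=(\pi_t)$ with $\pi_t:\mathcal H_t\to\Delta(\mathcal A)$; its value functions are $V^\pi_{T+1}\equiv0$, $Q^\pi_t(h_t,a_t)=\mathbb E[R_t+V^\pi_{t+1}(H_{t+1})\mid H_t=h_t,A_t=a_t]$, $V^\pi_t(h_t)=\sum_a\pi_t(a\mid h_t)Q^\pi_t(h_t,a)$. Integral probability metric: $d_{\mathfrak F}(\mu,\nu)=\sup_{f\in\mathfrak F}|\int f\,d\mu-\int f\,d\nu|$. Minkowski functional: $\rho_{\mathfrak F}(f)=\inf\{\rho>0:\rho^{-1}f\in\mathfrak F\}$. *)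

(* Defs.v *)
From HB Require Import structures.
From mathcomp Require Import all_boot all_order all_algebra.
From mathcomp Require Import all_classical all_reals all_analysis.
Unset Printing Implicit Defensive.
Import Order.TTheory GRing.Theory Num.Theory.
Local Open Scope classical_set_scope.
Local Open Scope ring_scope.

(* Integral probability metric d_F(mu, nu) = sup_{f in F} |int f dmu - int f dnu|
   (extended-real valued; the sup of the empty class is -oo). *)
Definition ipm {d} {Z : measurableType d} {R : realType}
    (F : set (Z -> R)) (mu nu : set Z -> \bar R) : \bar R :=
  ereal_sup [set `| (\int[mu]_z (f z)%:E) - (\int[nu]_z (f z)%:E) |%E | f in F].

(* Minkowski functional rho_F(f) = inf { rho > 0 : rho^-1 f \in F }
   (extended-real valued; +oo if the set is empty). *)
Definition minkowski {d} {Z : measurableType d} {R : realType}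
    (F : set (Z -> R)) (f : Z -> R) : \bar R :=
  ereal_inf [set r%:E | r in [set r : R | 0 < r /\ F (fun z => r^-1 * f z)]].

Section TrueSystem.
(* Histories are sequences of (observation, action) pairs:
   H_1 = [::], H_{t+1} = rcons H_t (Y_t, A_t); a realization of H_t has size t-1.
   kappa t h a is the conditional law of (Y_t, R_t) given H_t = h, A_t = a.
   pi t h a is pi_t(a | h).  *)
Context {R : realType} {A : finType} {dY : measure_display} {Y : measurableType dY}
  (kappa : nat -> seq (Y * A) -> A -> probability (Y * R)%type R)
  (pi : nat -> seq (Y * A) -> A -> R).

(* Vpi k t h : value at time t when k steps remain (k = T + 1 - t). *)
Fixpoint Vpi (k t : nat) (h : seq (Y * A)) {struct k} : R :=
  match k with
  | 0 => 0
  | k'.+1 => \sum_(a : A) pi t h a *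
      fine (\int[kappa t h a]_yr ((yr : Y * R).2 + Vpi k' t.+1 (rcons h (yr.1, a)))%:E)
  end.

(* Q_t(h,a) = E[R_t + V_{t+1}(H_{t+1}) | H_t = h, A_t = a], k = T - t steps remain after t *)
Definition Qpi (k t : nat) (h : seq (Y * A)) (a : A) : R :=
  fine (\int[kappa t h a]_yr ((yr : Y * R).2 + Vpi k t.+1 (rcons h (yr.1, a)))%:E).
End TrueSystem.

Section ApproxSystem.
Context {R : realType} {A : finType} {dZ : nat -> measure_display}
  {Z : forall t, measurableType (dZ t)}
  (Phat : forall t, Z t -> A -> probability (Z t.+1) R)
  (rhat : forall t, Z t -> A -> R)
  (pihat : forall t, Z t -> A -> R).

Fixpoint Vhat (k : nat) : forall t, Z t -> R :=
  match k with
  | 0 => fun t _ => 0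
  | k'.+1 => fun t z => \sum_(a : A) pihat t z a *
      (rhat t z a + fine (\int[Phat t z a]_z' (Vhat k' t.+1 z')%:E))
  end.

Definition Qhat (k t : nat) (z : Z t) (a : A) : R :=
  rhat t z a + fine (\int[Phat t z a]_z' (Vhat k t.+1 z')%:E).

Fixpoint alphak (F : forall t, set (Z t -> R)) (eps delta : nat -> R)
    (k t : nat) {struct k} : \bar R :=
  match k with
  | 0 => 0%E
  | k'.+1 => ((eps t)%:E + minkowski (F t.+1) (Vhat k' t.+1) * (delta t)%:E
              + alphak F eps delta k' t.+1)%E
  end.
End ApproxSystem.

(* Main.v *)
Require Import Defs.
From HB Require Import structures.
From mathcomp Require Import all_boot all_order all_algebra.
From mathcomp Require Import all_classical all_reals all_analysis.
From mathcomp Require Import measurable_realfun zify lra.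
Import Order.TTheory GRing.Theory Num.Theory.
Local Open Scope classical_set_scope.
Local Open Scope ring_scope.

Lemma conv_bound {R : realType} (A : finType) (p x y : A -> R) (e : \bar R) :
  (forall a, 0 <= p a) -> \sum_a p a = 1 -> (0 <= e)%E ->
  (forall a, ((`|x a - y a|)%:E <= e)%E) ->
  ((`|\sum_a p a * x a - \sum_a p a * y a|)%:E <= e)%E.
Proof.
move=> p0 p1 e0 hxy.
case: e e0 hxy => [r| |] e0 hxy; last by [].
  2: by rewrite leey.
rewrite lee_fin -sumrB.
apply: (le_trans (ler_norm_sum _ _ _)).
apply: (@le_trans _ _ (\sum_a p a * r)).
  apply: ler_sum => a _; rewrite -mulrBr normrM ger0_norm //.
  by apply: ler_wpM2l => //; rewrite -lee_fin.
by rewrite -mulr_suml p1 mul1r.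
Qed.

Section H.
Context {R : realType} {d : measure_display} {T : measurableType d}.
Variable P : probability T R.

Lemma bdd_int (f : T -> R) (M : R) : measurable_fun [set: T] f ->
  (forall x, `|f x| <= M) -> P.-integrable [set: T] (EFin \o f).
Proof.
move=> mf fM.
apply: (le_integrable measurableT _ _ (finite_measure_integrable_cst P M measurableT)).
  exact/measurable_EFinP.
move=> x _ /=; rewrite lee_fin.
exact: (le_trans (fM x) (ler_norm M)).
Qed.

Definition Ir (f : T -> R) := fine (\int[P]_x (f x)%:E)%E.

Lemma IrD f g : P.-integrable [set: T] (EFin \o f) -> P.-integrable [set: T] (EFin \o g) ->
  fine (\int[P]_x ((f x + g x)%:E))%E = Ir f + Ir g.
Proof.
move=> If Ig.
have -> : (\int[P]_x ((f x + g x)%:E))%E = (\int[P]_x (f x)%:E + \int[P]_x (g x)%:E)%E.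
  rewrite -(integralD_EFin measurableT If Ig).
  by apply: eq_integral => x _; rewrite EFinD.
rewrite fineD //; exact: integrable_fin_num.
Qed.

Lemma IrZ k f : P.-integrable [set: T] (EFin \o f) ->
  Ir (fun x => k * f x) = k * Ir f.
Proof.
move=> If; rewrite /Ir.
have -> : (\int[P]_x ((k * f x)%:E))%E = (k%:E * \int[P]_x (f x)%:E)%E.
  rewrite -(integralZl measurableT If).
  by apply: eq_integral => x _; rewrite EFinM.
rewrite fineM //; exact: integrable_fin_num.
Qed.

Lemma Ir_bound f g c : P.-integrable [set: T] (EFin \o f) -> P.-integrable [set: T] (EFin \o g) ->
  (forall x, `|f x - g x| <= c) -> `|Ir f - Ir g| <= c.
Proof.
move=> If Ig fg.
have Ifin := integrable_fin_num measurableT If; have Igfin := integrable_fin_num measurableT Ig.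
rewrite /Ir -fineB // -integralB_EFin //.
have IB : P.-integrable [set: T] (EFin \o (fun x => f x - g x)).
  have := integrableB measurableT If Ig.
  by apply: eq_integrable => // x _ /=; rewrite EFinB.
have e : (\int[P]_x ((f x)%:E - (g x)%:E) = \int[P]_x ((f x - g x)%:E))%E.
  by apply: eq_integral => x _; rewrite EFinB.
rewrite e.
have fin2 := integrable_fin_num measurableT IB.
rewrite -lee_fin -abse_EFin fineK //.
apply: (le_trans (le_abse_integral _ measurableT _)).
  by case/integrableP: IB.
apply: (le_trans (ge0_le_integral P (f2 := fun _ => c%:E) measurableT _ _ _ _)).
- by move=> x _; exact: abse_ge0.
- by apply: measurableT_comp => //; case/integrableP: IB.
- exact: measurable_cst.
- by move=> x _; rewrite abse_EFin lee_fin.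
rewrite integral_cst //.
have h1 := probability_setT P.
move: h1; set m := (X in (_ * X)%E); move=> h1.
have -> : m = 1%E by exact: h1.
by rewrite mule1.
Qed.

End H.

Theorem mainTheorem3
  (R : realType) (T : nat) (A : finType)
  (dY : measure_display) (Y : measurableType dY)
  (kappa : nat -> seq (Y * A) -> A -> probability (Y * R)%type R)
  (dZ : nat -> measure_display) (Z : forall t, measurableType (dZ t))
  (F : forall t, set (Z t -> R))
  (eps delta : nat -> R)
  (sigmahat : forall t, seq (Y * A) -> Z t)
  (Phat : forall t, Z t -> A -> probability (Z t.+1) R)
  (rhat : forall t, Z t -> A -> R)
  (pihat : forall t, Z t -> A -> R)
  (* the class F consists of uniformly bounded measurable functions *)
  (hFmeas : forall t f, F t f -> measurable_fun [set: Z t] f)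
  (hFbd : forall t, exists M : R, forall f, F t f -> forall z, `|f z| <= M)
  (heps : forall t, (1 <= t <= T)%N -> 0 < eps t)
  (hdelta : forall t, (1 <= t <= T)%N -> 0 < delta t)
  (* pihat_t(. | z) is a probability distribution on A *)
  (hpi0 : forall t z a, 0 <= pihat t z a)
  (hpi1 : forall t z, \sum_(a : A) pihat t z a = 1)
  (* well-definedness: sigmahat_{t+1}(H_{t+1}) is a random variable *)
  (hsig : forall t, (1 <= t <= T)%N -> forall h, size h = t.-1 -> forall a,
     measurable_fun [set: (Y * R)%type] (fun yr : Y * R => sigmahat t.+1 (rcons h (yr.1, a))))
  (* well-definedness of the (conditional) expectations *)
  (hRint : forall t, (1 <= t <= T)%N -> forall h, size h = t.-1 -> forall a,
     (kappa t h a).-integrable [set: (Y * R)%type] (fun yr : Y * R => (yr.2)%:E))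
  (hVint : forall t, (1 <= t <= T)%N -> forall h, size h = t.-1 -> forall a,
     (kappa t h a).-integrable [set: (Y * R)%type]
       (fun yr : Y * R => (Vpi kappa (fun t h a => pihat t (sigmahat t h) a)
                              (T - t) t.+1 (rcons h (yr.1, a)))%:E))
  (hVhint : forall t, (1 <= t <= T)%N -> forall z a,
     (Phat t z a).-integrable [set: Z t.+1]
       (fun z' => (Vhat Phat rhat pihat (T - t) t.+1 z')%:E))
  (* (AP1) *)
  (AP1 : forall t, (1 <= t <= T)%N -> forall h, size h = t.-1 -> forall a,
     `| fine (\int[kappa t h a]_yr ((yr : Y * R).2)%:E) - rhat t (sigmahat t h) a | <= eps t)
  (* (AP2) *)
  (AP2 : forall t, (1 <= t <= T)%N -> forall h, size h = t.-1 -> forall a,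
     (ipm (F t.+1)
        (pushforward (kappa t h a) (fun yr : Y * R => sigmahat t.+1 (rcons h (yr.1, a))))
        (Phat t (sigmahat t h) a) <= (delta t)%:E)%E) :
  let pisharp := fun t h a => pihat t (sigmahat t h) a in
  let alpha := fun t => alphak Phat rhat pihat F eps delta (T.+1 - t) t in
  forall t, (1 <= t <= T)%N -> forall h, size h = t.-1 -> forall a,
    ((`| Qpi kappa pisharp (T - t) t h a
         - Qhat Phat rhat pihat (T - t) t (sigmahat t h) a |)%:E <= alpha t)%E /\
    ((`| Vpi kappa pisharp (T.+1 - t) t h
         - Vhat Phat rhat pihat (T.+1 - t) t (sigmahat t h) |)%:E <= alpha t)%E.
Proof.
move=> pisharp alpha.
have mink_ge0 : forall t (f : Z t -> R), (0 <= Defs.minkowski (F t) f)%E.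
  move=> t0 f; apply/ereal_infP => y [r [r0 _] <-]; by rewrite lee_fin ltW.
have alpha_ge0 : forall k t, (1 <= t)%N -> (t + k <= T.+1)%N ->
    (0 <= alphak Phat rhat pihat F eps delta k t)%E.
  elim=> [|k IH] t0 t1 tk /=; first by [].
  rewrite adde_ge0 // ?adde_ge0 //.
  - by rewrite lee_fin ltW // heps //; apply/andP; split => //; lia.
  - by apply: mule_ge0 => //; rewrite lee_fin ltW // hdelta //; apply/andP; split => //; lia.
  - by apply: IH; lia.
have alphaE : forall t, (t <= T)%N -> alpha t =
   ((eps t)%:E + Defs.minkowski (F t.+1) (Vhat Phat rhat pihat (T - t) t.+1) * (delta t)%:E
    + alpha t.+1)%E.
  move=> t0 tT; rewrite /alpha subSS.
  by have -> : (T.+1 - t0 = (T - t0).+1)%N by lia.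
have alpha_ge0' : forall t, (1 <= t)%N -> (t <= T.+1)%N -> (0 <= alpha t)%E.
  move=> t0 t1 tT; apply: alpha_ge0 => //; lia.
have Qb : forall t, (1 <= t <= T)%N ->
   (forall h', size h' = t -> (t < T)%N ->
     ((`| Vpi kappa pisharp (T.+1 - t.+1) t.+1 h'
         - Vhat Phat rhat pihat (T.+1 - t.+1) t.+1 (sigmahat t.+1 h') |)%:E <= alpha t.+1)%E) ->
   forall h, size h = t.-1 -> forall a,
    ((`| Qpi kappa pisharp (T - t) t h a
         - Qhat Phat rhat pihat (T - t) t (sigmahat t h) a |)%:E <= alpha t)%E.
  move=> t0 /andP[t1 tT] IHV h0 hs a.
  have tr : (0 < t0 <= T)%N by rewrite t1 tT.
  set k := (T - t0)%N.
  set kap := kappa t0 h0 a.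
  set sig := fun yr : Y * R => sigmahat t0.+1 (rcons h0 (yr.1, a)).
  set W := fun yr : Y * R => Vpi kappa pisharp k t0.+1 (rcons h0 (yr.1, a)).
  set Vh := Vhat Phat rhat pihat k t0.+1.
  set Pz := Phat t0 (sigmahat t0 h0) a.
  have msig : measurable_fun [set: Y * R] sig by exact: hsig.
  have IR : kap.-integrable [set: Y * R] (EFin \o (fun yr : Y * R => yr.2)) by exact: hRint.
  have IW : kap.-integrable [set: Y * R] (EFin \o W) by exact: hVint.
  have IP : Pz.-integrable [set: Z t0.+1] (EFin \o Vh) by exact: hVhint.
  have eQ : Qpi kappa pisharp k t0 h0 a = Ir kap (fun yr => yr.2) + Ir kap W.
    by rewrite /Qpi -IrD.
  have eQh : Qhat Phat rhat pihat k t0 (sigmahat t0 h0) a = rhat t0 (sigmahat t0 h0) a + Ir Pz Vh.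
    by [].
  rewrite eQ eQh (alphaE t0 tT).
  have [[r1 [r1pos Fr1]]|nS] := pselect (exists r, 0 < r /\ F t0.+1 (fun z => r^-1 * Vh z)); last first.
    have -> : Defs.minkowski (F t0.+1) Vh = +oo%E.
      apply/eqP; rewrite eq_le leey /=; apply/ereal_infP => y [r rS <-].
      by exfalso; apply: nS; exists r.
    rewrite mulyr gtr0_sg ?hdelta // mul1e addey // addye ?leey //.
    have := alpha_ge0' t0.+1 isT ltac:(lia).
    by case: (alpha t0.+1).
  have [M hM] := hFbd t0.+1.
  have bddI : forall r, 0 < r -> F t0.+1 (fun z => r^-1 * Vh z) ->
     kap.-integrable [set: Y * R] (EFin \o ((fun z => r^-1 * Vh z) \o sig)) /\
     Pz.-integrable [set: Z t0.+1] (EFin \o (fun z => r^-1 * Vh z)).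
    move=> r rpos Fr; split.
      apply: (bdd_int _ _ M).
        exact: measurableT_comp (hFmeas _ _ Fr) msig.
      by move=> x; exact: (hM _ Fr (sig x)).
    apply: (bdd_int _ _ M); [exact: hFmeas | by move=> x; exact: (hM _ Fr x)].
  have IVs : kap.-integrable [set: Y * R] (EFin \o (Vh \o sig)).
    have [I1 _] := bddI r1 r1pos Fr1.
    have := integrableZl measurableT r1 I1.
    apply: eq_integrable => // x _ /=.
    by rewrite -EFinM mulrA mulfV ?gt_eqF // mul1r.
  have key : forall r, 0 < r -> F t0.+1 (fun z => r^-1 * Vh z) ->
      `|Ir kap (Vh \o sig) - Ir Pz Vh| <= r * delta t0.
    move=> r rpos Fr.
    set g := fun z => r^-1 * Vh z.
    have [I1 I2] := bddI r rpos Fr.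
    have e1 : Ir kap (Vh \o sig) = r * Ir kap (g \o sig).
      rewrite -IrZ //; rewrite /Ir; congr fine; apply: eq_integral => x _.
      by rewrite /g /= mulrA mulfV ?gt_eqF // mul1r.
    have e2 : Ir Pz Vh = r * Ir Pz g.
      rewrite -IrZ //; rewrite /Ir; congr fine; apply: eq_integral => x _.
      by rewrite /g /= mulrA mulfV ?gt_eqF // mul1r.
    rewrite e1 e2 -mulrBr normrM gtr0_norm // ler_pM2l //.
    have ap := AP2 t0 tr h0 hs a.
    rewrite -lee_fin; apply: le_trans ap.
    rewrite /ipm; apply: ereal_sup_ge; eexists; first by exists g.
    have pT : sig @^-1` [set: Z t0.+1] = [set: Y * R] by [].
    rewrite (integral_pushforward msig); last first.
    - exact: measurableT.
    - by rewrite pT.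
    - by apply/measurable_EFinP; exact: hFmeas _ _ Fr.
    rewrite pT /Ir.
    rewrite -(fineK (integrable_fin_num measurableT I1)).
    rewrite -(fineK (integrable_fin_num measurableT I2)).
    by rewrite -EFinB abse_EFin.
  rewrite -/k -/Vh.
  have rho0 := mink_ge0 _ Vh.
  have rhoF : (Defs.minkowski (F t0.+1) Vh <= r1%:E)%E.
    by apply: ge_ereal_inf; exists r1%:E => //; exists r1.
  have rhofin : Defs.minkowski (F t0.+1) Vh \is a fin_num.
    by rewrite ge0_fin_numE // (le_lt_trans rhoF) // ltry.
  set r0 := fine (Defs.minkowski (F t0.+1) Vh).
  have rhoE : Defs.minkowski (F t0.+1) Vh = r0%:E by rewrite /r0 fineK.
  have h3 : `|Ir kap (Vh \o sig) - Ir Pz Vh| <= r0 * delta t0.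
    have : ((`|Ir kap (Vh \o sig) - Ir Pz Vh| / delta t0)%:E <= Defs.minkowski (F t0.+1) Vh)%E.
      apply/ereal_infP => y [r [rpos Fr] <-].
      by rewrite lee_fin ler_pdivrMr ?hdelta //; exact: key.
    by rewrite rhoE lee_fin ler_pdivrMr ?hdelta.
  have ga0 := alpha_ge0' t0.+1 isT ltac:(lia).
  have [aI|aF] := eqVneq (alpha t0.+1) +oo%E.
    rewrite aI rhoE -EFinM -EFinD addey ?leey //.
  have afin : alpha t0.+1 \is a fin_num by rewrite ge0_fin_numE // ltey.
  set a' := fine (alpha t0.+1).
  have aE : alpha t0.+1 = a'%:E by rewrite /a' fineK.
  have a'0 : 0 <= a' by rewrite -lee_fin -aE.
  have h2 : `|Ir kap W - Ir kap (Vh \o sig)| <= a'.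
    apply: Ir_bound => // yr.
    case: (ltnP t0 T) => tlt.
      have := IHV (rcons h0 (yr.1, a)) _ tlt.
      rewrite subSS aE lee_fin; apply.
      by rewrite size_rcons hs prednK.
    have k0 : (T - t0 = 0)%N by apply/eqP; rewrite subn_eq0.
    have -> : W yr = 0 by rewrite /W /k k0.
    have -> : (Vh \o sig) yr = 0 by rewrite /Vh /k k0.
    by rewrite subrr normr0.
  have h1 : `|Ir kap (fun yr : Y * R => yr.2) - rhat t0 (sigmahat t0 h0) a| <= eps t0.
    exact: AP1.
  rewrite rhoE aE -EFinM -!EFinD lee_fin.
  move: h1 h2 h3; rewrite !ler_norml => /andP[h1a h1b] /andP[h2a h2b] /andP[h3a h3b].
  apply/andP; split; lra.
have Vb : forall t, (1 <= t <= T)%N -> forall h,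
   (forall a, ((`| Qpi kappa pisharp (T - t) t h a
         - Qhat Phat rhat pihat (T - t) t (sigmahat t h) a |)%:E <= alpha t)%E) ->
    ((`| Vpi kappa pisharp (T.+1 - t) t h
         - Vhat Phat rhat pihat (T.+1 - t) t (sigmahat t h) |)%:E <= alpha t)%E.
  move=> t0 /andP[t1 tT] h0 hQ.
  have -> : (T.+1 - t0 = (T - t0).+1)%N by lia.
  apply: (conv_bound _ (fun a => pihat t0 (sigmahat t0 h0) a)
     (fun a => Qpi kappa pisharp (T - t0) t0 h0 a)
     (fun a => Qhat Phat rhat pihat (T - t0) t0 (sigmahat t0 h0) a)) => //.
  by apply: alpha_ge0' => //; lia.
have main : forall n t, (T - t)%N = n -> (1 <= t <= T)%N -> forall h, size h = t.-1 ->
   (forall a, ((`| Qpi kappa pisharp (T - t) t h a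
         - Qhat Phat rhat pihat (T - t) t (sigmahat t h) a |)%:E <= alpha t)%E) /\
    ((`| Vpi kappa pisharp (T.+1 - t) t h
         - Vhat Phat rhat pihat (T.+1 - t) t (sigmahat t h) |)%:E <= alpha t)%E.
  elim=> [|n IH] t0 tn tr h0 hs.
    have hQ := Qb t0 tr (fun h' _ tT => ltac:(exfalso; lia)) h0 hs.
    by split => //; apply: Vb.
  have IHV : forall h', size h' = t0 -> (t0 < T)%N ->
     ((`| Vpi kappa pisharp (T.+1 - t0.+1) t0.+1 h'
         - Vhat Phat rhat pihat (T.+1 - t0.+1) t0.+1 (sigmahat t0.+1 h') |)%:E <= alpha t0.+1)%E.
    move=> h' hs' _; apply: (proj2 (IH t0.+1 _ _ h' _)); lia.
  have hQ := Qb t0 tr IHV h0 hs.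
  by split => //; apply: Vb.
move=> t0 tr h0 hs a.
have [hQ hV] := main _ t0 erefl tr h0 hs.
by split.
Qed.
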